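(* Domineering on the $2 \times 5$ torus and on the $2 \times 9$ torus are second-player wins, and Domineering on the $2 \times 13$ torus is a win for Hepzibah regardless of who moves first.
   Context: Domineering: Vera places vertical dominoes (covering two vertically adjacent empty cells), Hepzibah places horizontal dominoes (covering two horizontally adjacent empty cells); players alternate, and a player who cannot move on her turn loses. The $2 \times n$ torus is the array of $2$ rows and $n$ columns of cells with both pairs of opposite edges identified, so horizontal adjacency wraps around from column $n$ to column $1$ (and a vertical domino occupies both cells of a column). *)

(* Defs.v *)
From mathcomp Require Import all_boot.
Set Implicit Arguments. Unset Strict Implicit. Unset Printing Implicit Defensive.

Inductive player := Vera | Hepzibah.

Definition opp (p : player) : player :=
  match p with Vera => Hepzibah | Hepzibah => Vera end.

(* Cells of the 2 x n torus: (row, column), rows 'I_2, columns 'I_n.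
   A position is the set of occupied cells. *)
Definition cell (n : nat) := ('I_2 * 'I_n)%type.
Definition position (n : nat) := {set cell n}.

Definition row0 : 'I_2 := ord0.
Definition row1 : 'I_2 := ord_max.

Definition vdomino (n : nat) (j : 'I_n) : position n :=
  [set (row0, j); (row1, j)].

(* The two cells covered by a horizontal domino in row r starting at column j;
   horizontal adjacency wraps around: column j is adjacent to column j+1 mod n. *)
Definition hdomino (n : nat) (r : 'I_2) (j : 'I_n) : position n :=
  [set (r, j); (r, ordS j)].

Definition move (n : nat) (p : player) (b b' : position n) : Prop :=
  match p with
  | Vera => exists j : 'I_n,
      [disjoint vdomino j & b] /\ b' = vdomino j :|: b
  | Hepzibah => exists (r : 'I_2) (j : 'I_n), (1 < n)%N /\
      [disjoint hdomino r j & b] /\ b' = hdomino r j :|: b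
  end.

(* Lose n p b : the player p, about to move in position b, loses, i.e. every
   move of p leads to a position that the opponent wins (normal play: a player
   who cannot move loses, since then Lose holds vacuously). *)
Inductive Win (n : nat) : player -> position n -> Prop :=
| WinMove p b b' : move p b b' -> Lose (opp p) b' -> Win p b
with Lose (n : nat) : player -> position n -> Prop :=
| LoseAll p b : (forall b', move p b b' -> Win (opp p) b') -> Lose p b.

Definition empty_board (n : nat) : position n := set0.

Definition second_player_win (n : nat) : Prop :=
  Lose Vera (empty_board n) /\ Lose Hepzibah (empty_board n).

Definition hepzibah_wins (n : nat) : Prop :=
  Win Hepzibah (empty_board n) /\ Lose Vera (empty_board n).

(* Main.v *)
Require Import Defs.
From Stdlib Require Import NArith.
From mathcomp Require Import all_boot.

Set Implicit Arguments. Unset Strict Implicit. Unset Printing Implicit Defensive.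

Section Game.
Variable n : nat.

Definition idx (c : cell n) : N := N.of_nat (c.1 * n + c.2).

Definition cands (p : player) : seq (cell n * cell n) :=
  match p with
  | Vera => [seq ((row0, j), (row1, j)) | j <- ord_enum n]
  | Hepzibah => if (1 < n)%N then
      [seq ((r, j), (r, ordS j)) | r <- ord_enum 2, j <- ord_enum n] else [::]
  end.

Definition moves (p : player) (m : N) : seq N :=
  [seq N.setbit (N.setbit m (idx c.1)) (idx c.2) |
     c <- cands p & ~~ N.testbit m (idx c.1) && ~~ N.testbit m (idx c.2)].

Definition candsN (p : player) : seq (nat * nat) :=
  match p with
  | Vera => [seq (j, n + j) | j <- iota 0 n]
  | Hepzibah => if (1 < n)%N then
      [seq (r * n + j, r * n + j.+1 %% n) | r <- iota 0 2, j <- iota 0 n] else [::]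
  end.

Definition movesN (p : player) (m : N) : seq N :=
  [seq N.setbit (N.setbit m (N.of_nat c.1)) (N.of_nat c.2) |
     c <- candsN p & ~~ N.testbit m (N.of_nat c.1) && ~~ N.testbit m (N.of_nat c.2)].

Definition idxn (c : cell n) : nat := c.1 * n + c.2.

Lemma candsN_eq p : candsN p = map (fun c => (idxn c.1, idxn c.2)) (cands p).
Proof.
case: p; rewrite /candsN /cands.
  rewrite -val_ord_enum -!map_comp; apply: eq_map => j /=.
  by rewrite /idxn /= mul0n mul1n.
case: ifP => // _.
rewrite map_allpairs -(val_ord_enum 2) -(val_ord_enum n) allpairs_mapl allpairs_mapr.
by [].
Qed.

Lemma movesN_eq p m : movesN p m = moves p m.
Proof. by rewrite /movesN candsN_eq filter_map -map_comp. Qed.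

Fixpoint scan (g : N -> option bool) (l : seq N) : option bool :=
  match l with
  | [::] => Some false
  | m2 :: l' => match g m2 with
                | Some false => Some true
                | Some true => scan g l'
                | None => None end
  end.

Fixpoint solve (f : nat) (p : player) (m : N) : option bool :=
  match f with
  | 0 => None
  | f'.+1 => scan (solve f' (opp p)) (movesN p m)
  end.

Lemma scan_true g l : scan g l = Some true -> exists2 m2, m2 \in l & g m2 = Some false.
Proof.
elim: l => //= a l IH.
case E: (g a) => [[]|] //.
  by move/IH => [m2 H1 H2]; exists m2 => //; rewrite in_cons H1 orbT.
by move=> _; exists a => //; rewrite in_cons eqxx.
Qed.

Lemma scan_false g l : scan g l = Some false -> forall m2, m2 \in l -> g m2 = Some true.
Proof.
elim: l => //= a l IH.
case E: (g a) => [[]|] // H m2; rewrite in_cons => /orP[/eqP ->|] //.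
exact: IH.
Qed.

Definition R (b : position n) (m : N) := forall c, (c \in b) = N.testbit m (idx c).

Lemma idx_inj : injective idx.
Proof.
move=> [r j] [r' j'] /= /Nat2N.inj H.
have Hj : j = j' :> nat.
  have := congr1 (modn^~ n) H.
  by rewrite !modnMDl !modn_small.
have Hr : r * n = r' * n by rewrite Hj in H; apply/eqP; rewrite -(eqn_add2r j') H.
have n0 : (0 < n)%N by case: n j {H Hj Hr} => [[]|].
move/eqP: Hr; rewrite eqn_pmul2r // => /eqP Hr.
by congr (_, _); apply: val_inj.
Qed.

Lemma idx_eqb c c' : N.eqb (idx c) (idx c') = (c == c').
Proof.
case: eqP => [->|H]; first by rewrite N.eqb_refl.
apply/N.eqb_neq => E; exact: H (idx_inj E).
Qed.

Lemma R_add b m c1 c2 : R b m ->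
  R ([set c1; c2] :|: b) (N.setbit (N.setbit m (idx c1)) (idx c2)).
Proof.
move=> Hb c; rewrite !N.setbit_eqb !idx_eqb !inE Hb.
by rewrite [c == c1]eq_sym [c == c2]eq_sym; case: (c1 == c); case: (c2 == c).
Qed.

Lemma disj_R b m c1 c2 : R b m ->
  [disjoint [set c1; c2] & b] = ~~ N.testbit m (idx c1) && ~~ N.testbit m (idx c2).
Proof.
by move=> Hb; rewrite disjoints_subset subUset !sub1set !inE !Hb.
Qed.

Definition domset (p : player) (c : cell n * cell n) : position n := [set c.1; c.2].

Lemma movesA p b b' m : R b m -> move p b b' ->
  exists2 m2, m2 \in moves p m & R b' m2.
Proof.
move=> Hb; case: p => /=.
  move=> [j [Hd ->]].
  exists (N.setbit (N.setbit m (idx (row0, j))) (idx (row1, j))); last exact: R_add.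
  apply/mapP; exists ((row0, j), (row1, j)) => //.
  rewrite mem_filter /= -(disj_R _ _ Hb) Hd /=.
  by apply/mapP; exists j => //; rewrite mem_ord_enum.
move=> [r [j [Hn [Hd ->]]]].
exists (N.setbit (N.setbit m (idx (r, j))) (idx (r, ordS j))); last exact: R_add.
apply/mapP; exists ((r, j), (r, ordS j)) => //.
rewrite mem_filter /= -(disj_R _ _ Hb) Hd /= Hn.
by apply/allpairsP; exists (r, j); rewrite !mem_ord_enum.
Qed.

Lemma movesB p b m m2 : R b m -> m2 \in moves p m ->
  exists2 b', move p b b' & R b' m2.
Proof.
move=> Hb /mapP [[c1 c2]]; rewrite mem_filter /= -(disj_R _ _ Hb) => /andP [Hd Hc] ->.
exists ([set c1; c2] :|: b); last exact: R_add.
case: p Hc => /= Hc.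
  by move/mapP: Hc => [j _ [E1 E2]]; subst; exists j.
have Hn : 1 < n by move: Hc; case: (1 < n).
rewrite Hn in Hc; move/allpairsP: Hc => [[r j] [_ _ /= E]]; case: E => E1 E2; subst.
by exists r, j; split.
Qed.

Lemma solve_sound f : forall p b m, R b m ->
  (solve f p m = Some true -> Win p b) /\ (solve f p m = Some false -> Lose p b).
Proof.
elim: f => [|f IH] p b m Hb //=; rewrite movesN_eq; split.
  move/scan_true => [m2 Hm2 Hs].
  have [b' Hmv Hb'] := movesB Hb Hm2.
  apply: (WinMove Hmv); exact: (proj2 (IH _ _ _ Hb') Hs).
move/scan_false => H; constructor => b' Hmv.
have [m2 Hm2 Hb'] := movesA Hb Hmv.
exact: (proj1 (IH _ _ _ Hb') (H _ Hm2)).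
Qed.

Lemma R0 : R (empty_board n) N0.
Proof. by move=> c; rewrite inE N.bits_0. Qed.

End Game.

Lemma win_of n p f : solve n f p N0 = Some true -> Win p (empty_board n).
Proof. exact: (proj1 (@solve_sound n f p _ _ (@R0 n))). Qed.
Lemma lose_of n p f : solve n f p N0 = Some false -> Lose p (empty_board n).
Proof. exact: (proj2 (@solve_sound n f p _ _ (@R0 n))). Qed.

Theorem mainTheorem14 :
  second_player_win 5 /\ second_player_win 9 /\ hepzibah_wins 13.
Proof.
split; [|split]; split.
- by apply: (lose_of (f := 20)); vm_compute.
- by apply: (lose_of (f := 20)); vm_compute.
- by apply: (lose_of (f := 20)); vm_compute.
- by apply: (lose_of (f := 20)); vm_compute.
- by apply: (win_of (f := 20)); vm_compute.
- by apply: (lose_of (f := 20)); vm_compute.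
Qed.
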